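(* Let $h\colon\{0,1\}^k\to\{0,1\}$ be a partial function, and for each $z\in\{0,1\}$ let $\mathcal D_z$ be a probability distribution over $h^{-1}(z)$. Then for every $\varepsilon\in[0,1]$ there exist a conjunction $C\colon\{0,1\}^k\to\{0,1\}$ of width $\mathsf{PostBPP}_\varepsilon(h)$ and a $z\in\{0,1\}$ such that $\varepsilon\cdot C(\mathcal D_z)\ge(1-\varepsilon)\cdot C(\mathcal D_{1-z})$ and $C(\mathcal D_z)>0$.
   Context: A conjunction is an AND of literals (variables or negated variables); its width is its number of literals. For a conjunction $C$ and distribution $\mathcal D$, $C(\mathcal D)=\Pr_{x\sim\mathcal D}[C(x)=1]$. A randomized decision tree is a probability distribution over deterministic decision trees; its cost is the maximum depth of a tree in its support. $\mathsf{PostBPP}_\varepsilon(h)$ is the minimum cost of a randomized decision tree with leaves labeled in $\{0,1,\bot\}$ such that on every $x$ in the domain of $h$, the probability of outputting $\bot$ is $<1$ and, conditioned on not outputting $\bot$, the output equals $h(x)$ with probability $\ge 1-\varepsilon$. *)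

(* Defs.v *)
From HB Require Import structures.
From mathcomp Require Import all_boot all_order all_algebra.
From mathcomp Require Import reals.
Set Implicit Arguments. Unset Strict Implicit. Unset Printing Implicit Defensive.
Import Order.TTheory GRing.Theory Num.Theory.
Local Open Scope ring_scope.

Definition input (k : nat) := {ffun 'I_k -> bool}.

(* Partial Boolean function: None = outside the domain. *)
Definition pfun (k : nat) := input k -> option bool.

(* Deterministic decision trees; leaves labeled by option bool (None = ⊥). *)
Inductive dtree (k : nat) : Type :=
| Leaf of option bool
| Node of 'I_k & dtree k & dtree k.

Fixpoint depth k (t : dtree k) : nat :=
  match t with
  | Leaf _ => 0
  | Node _ t0 t1 => (maxn (depth t0) (depth t1)).+1
  end.

Fixpoint eval_tree k (t : dtree k) (x : input k) : option bool :=
  match t with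
  | Leaf o => o
  | Node i t0 t1 => if x i then eval_tree t1 x else eval_tree t0 x
  end.

(* A randomized decision tree: finitely supported probability distribution
   over deterministic trees, given as a list of (weight, tree) pairs. *)
Definition rdtree (R : realType) (k : nat) := seq (R * dtree k).

Definition is_rdtree (R : realType) k (T : rdtree R k) : Prop :=
  all (fun p => 0 <= p.1) T /\ \sum_(p <- T) p.1 = 1.

Definition rcost (R : realType) k (T : rdtree R k) : nat :=
  \max_(p <- T | 0 < p.1) depth p.2.

Definition prob_out (R : realType) k (T : rdtree R k) (x : input k) (o : option bool) : R :=
  \sum_(p <- T) p.1 * (eval_tree p.2 x == o)%:R.

Definition prob_not_bot (R : realType) k (T : rdtree R k) (x : input k) : R :=
  \sum_(p <- T) p.1 * (eval_tree p.2 x != None)%:R.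

Definition postbpp_correct (R : realType) k (eps : R) (h : pfun k) (T : rdtree R k) : Prop :=
  is_rdtree T /\
  forall x b, h x = Some b ->
    prob_out T x None < 1 /\
    prob_out T x (Some b) / prob_not_bot T x >= 1 - eps.

Definition PostBPP_eq (R : realType) k (eps : R) (h : pfun k) (d : nat) : Prop :=
  (exists T : rdtree R k, postbpp_correct eps h T /\ rcost T = d) /\
  (forall T : rdtree R k, postbpp_correct eps h T -> (d <= rcost T)%N).

Definition conj_t (k : nat) := {set ('I_k * bool)}.
Definition width k (C : conj_t k) : nat := #|C|.
Definition conj_eval k (C : conj_t k) (x : input k) : bool :=
  [forall l in C, x l.1 == l.2].

Definition is_dist (R : realType) k (D : {ffun input k -> R}) : Prop :=
  (forall x, 0 <= D x) /\ \sum_x D x = 1.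

Definition conj_prob (R : realType) k (C : conj_t k) (D : {ffun input k -> R}) : R :=
  \sum_x D x * (conj_eval C x)%:R.

(* Main.v *)
Require Import Defs.
From HB Require Import structures.
From mathcomp Require Import all_boot all_order all_algebra.
From mathcomp Require Import reals ring lra zify.
From Stdlib Require Import Classical.
Set Implicit Arguments. Unset Strict Implicit. Unset Printing Implicit Defensive.
Import Order.TTheory GRing.Theory Num.Theory.
Local Open Scope ring_scope.

Fixpoint leaves k (t : dtree k) : seq (conj_t k * option bool) :=
  match t with
  | Leaf o => [:: (set0, o)]
  | Node i t0 t1 => [seq ((i,false) |: l.1, l.2) | l <- leaves t0] ++
                    [seq ((i,true) |: l.1, l.2) | l <- leaves t1]
  end.

Lemma conj_eval_U1 k (C : conj_t k) i b x :
  conj_eval ((i,b) |: C) x = (x i == b) && conj_eval C x.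
Proof.
rewrite /conj_eval; apply/forall_inP/andP.
- move=> H; split; first by have := H (i,b); rewrite setU11 => /(_ isT).
  by apply/forall_inP => l lC; apply: H; rewrite setU1r.
- case=> /eqP xi /forall_inP H l; rewrite in_setU1 => /orP [/eqP -> /=|]; first by rewrite xi.
  exact: H.
Qed.

Lemma conj_eval0 k x : conj_eval (set0 : conj_t k) x.
Proof. by apply/forall_inP => l; rewrite in_set0. Qed.

Lemma leaves_sum (R : realType) k (t : dtree k) x o :
  ((eval_tree t x == o)%:R : R) =
  \sum_(l <- leaves t) ((l.2 == o) && conj_eval l.1 x)%:R.
Proof.
elim: t => [o'|i t0 IH0 t1 IH1] /=.
  by rewrite big_seq1 /= conj_eval0 andbT.
rewrite big_cat !big_map /=.
under eq_bigr => l _ do rewrite conj_eval_U1.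
under [X in _ = _ + X]eq_bigr => l _ do rewrite conj_eval_U1.
case: (x i) => /=.
  by rewrite big1 ?add0r // => l _; rewrite andbF.
by rewrite [X in _ + X]big1 ?addr0 // => l _; rewrite andbF.
Qed.

Lemma leaves_ex k (t : dtree k) x :
  exists2 l, l \in leaves t & conj_eval l.1 x && (l.2 == eval_tree t x).
Proof.
elim: t => [o|i t0 [l0 H0 E0] t1 [l1 H1 E1]] /=.
  exists (set0, o); first by rewrite inE.
  by rewrite /= conj_eval0 eqxx.
case Hx: (x i).
  exists ((i,true) |: l1.1, l1.2); last by rewrite conj_eval_U1 Hx.
  by rewrite mem_cat; apply/orP; right; apply: (map_f (fun l => ((i,true) |: l.1, l.2))).
exists ((i,false) |: l0.1, l0.2); last by rewrite conj_eval_U1 Hx.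
by rewrite mem_cat; apply/orP; left; apply: (map_f (fun l => ((i,false) |: l.1, l.2))).
Qed.

Lemma width_U1 k (C : conj_t k) a : (width (a |: C) <= (width C).+1)%N.
Proof. rewrite /width cardsU1; by case: (a \notin C). Qed.

Lemma leaves_width k (t : dtree k) l : l \in leaves t -> (width l.1 <= depth t)%N.
Proof.
elim: t l => [o|i t0 IH0 t1 IH1] l /=.
  by rewrite mem_seq1 => /eqP -> /=; rewrite /width cards0.
rewrite mem_cat => /orP [/mapP [l' Hl' ->]|/mapP [l' Hl' ->]] /=;
  apply: (leq_trans (width_U1 _ _)); rewrite ltnS.
  exact: (leq_trans (IH0 _ Hl') (leq_maxl _ _)).
exact: (leq_trans (IH1 _ Hl') (leq_maxr _ _)).
Qed.

Lemma leaves_cp (R : realType) k (t : dtree k) o (D : {ffun input k -> R}) :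
  \sum_(l <- leaves t) (l.2 == o)%:R * conj_prob l.1 D =
  \sum_x D x * (eval_tree t x == o)%:R.
Proof.
under eq_bigr => l _ do rewrite /conj_prob big_distrr /=.
rewrite exchange_big /=; apply: eq_bigr => x _.
rewrite (leaves_sum R) big_distrr /=; apply: eq_bigr => l _.
by case: (l.2 == o); case: (conj_eval l.1 x); rewrite /= ?mulr0 ?mulr1 ?mul0r ?mul1r.
Qed.

Fixpoint dtree_eqb k (t u : dtree k) : bool :=
  match t, u with
  | Leaf a, Leaf b => a == b
  | Node i a b, Node j c d => [&& i == j, dtree_eqb a c & dtree_eqb b d]
  | _, _ => false
  end.

Lemma dtree_eqP k : Equality.axiom (@dtree_eqb k).
Proof.
move=> t u; elim: t u => [a|i a IHa b IHb] [c|j c d] /=; try by constructor.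
  by apply: (iffP eqP) => [->|[->]].
case: (i =P j) => [->|hij] /=; last by constructor; case.
case: (IHa c) => [->|hac] /=; last by constructor; case.
case: (IHb d) => [->|hbd] /=; last by constructor; case.
by constructor.
Qed.

HB.instance Definition _ k := hasDecEq.Build (dtree k) (@dtree_eqP k).

Lemma notbot_split (R : realType) k (T : rdtree R k) x b :
  prob_not_bot T x = prob_out T x (Some b) + prob_out T x (Some (~~ b)).
Proof.
rewrite /prob_not_bot /prob_out -big_split /=; apply: eq_bigr => p _ /=.
by rewrite -mulrDr; case: (eval_tree p.2 x) => [[]|]; case: b; rewrite /= ?addr0 ?add0r.
Qed.

Lemma total_split (R : realType) k (T : rdtree R k) x :
  prob_out T x None + prob_not_bot T x = \sum_(p <- T) p.1.
Proof.
rewrite /prob_not_bot /prob_out -big_split /=; apply: eq_bigr => p _ /=.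
by rewrite -mulrDr; case: (eval_tree p.2 x) => [[]|]; rewrite /= ?addr0 ?add0r ?mulr1.
Qed.

Lemma swap_sum (R : realType) k (T : rdtree R k) (D : {ffun input k -> R}) o :
  \sum_(p <- T) p.1 * \sum_x D x * (eval_tree p.2 x == o)%:R =
  \sum_x D x * prob_out T x o.
Proof.
rewrite /prob_out; under eq_bigr => p _ do rewrite big_distrr /=.
rewrite exchange_big /=; apply: eq_bigr => x _.
rewrite big_distrr /=; apply: eq_bigr => p _.
by rewrite mulrCA.
Qed.

Lemma pointwise (R : realType) k (h : pfun k) (eps : R) (T : rdtree R k)
  (hT : postbpp_correct eps h T) x z :
  h x = Some z ->
  0 <= eps * prob_out T x (Some z) - (1 - eps) * prob_out T x (Some (~~ z)).
Proof.
move=> hx; case: hT => [[_ hs] hc]; case: (hc x z hx) => hN hr.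
have hNp : 0 < prob_not_bot T x.
  have := total_split T x; rewrite hs => E; lra.
rewrite ler_pdivlMr // (notbot_split T x z) in hr.
have -> : eps * prob_out T x (Some z) - (1 - eps) * prob_out T x (Some (~~ z))
  = prob_out T x (Some z) - (1 - eps) * (prob_out T x (Some z) + prob_out T x (Some (~~ z))) by ring.
by rewrite subr_ge0.
Qed.

Lemma sum_neg (R : realType) (I : eqType) (s : seq I) (F : I -> R) :
  (forall i, i \in s -> F i <= 0) -> (exists2 i, i \in s & F i < 0) ->
  \sum_(i <- s) F i < 0.
Proof.
elim: s => [|a s IH] H [i]; first by rewrite in_nil.
rewrite big_cons inE => /orP [/eqP -> Hi|Hs Hi].
  have : \sum_(j <- s) F j <= 0.
    by rewrite big_seq; apply: sumr_le0 => j js; apply: H; rewrite inE js orbT.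
  move=> Hr; lra.
have Ha : F a <= 0 by apply: H; rewrite inE eqxx.
have : \sum_(j <- s) F j < 0.
  by apply: IH; [move=> j js; apply: H; rewrite inE js orbT | exists i].
move=> Hr; lra.
Qed.

Lemma sum_pos (R : realType) (I : eqType) (s : seq I) (F : I -> R) :
  0 < \sum_(i <- s) F i -> exists2 i, i \in s & 0 < F i.
Proof.
move=> H; apply: NNPP => Hn.
have : \sum_(i <- s) F i <= 0.
  rewrite big_seq; apply: sumr_le0 => i iin; rewrite leNgt; apply/negP => Hi.
  by apply: Hn; exists i.
move=> H'; lra.
Qed.

Lemma inner_eq (R : realType) k (t : dtree k) (eps : R) (D1 D2 : {ffun input k -> R}) z :
  \sum_(l <- leaves t) (l.2 == Some z)%:R * (eps * conj_prob l.1 D1 - (1 - eps) * conj_prob l.1 D2)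
  = eps * \sum_x D1 x * (eval_tree t x == Some z)%:R
    - (1 - eps) * \sum_x D2 x * (eval_tree t x == Some z)%:R.
Proof.
rewrite -!leaves_cp !big_distrr -sumrB /=; apply: eq_bigr => l _ /=; ring.
Qed.

Lemma outer_eq (R : realType) k (T : rdtree R k) (eps : R) (D1 D2 : {ffun input k -> R}) z :
  \sum_(p <- T) p.1 * (eps * \sum_x D1 x * (eval_tree p.2 x == Some z)%:R
    - (1 - eps) * \sum_x D2 x * (eval_tree p.2 x == Some z)%:R)
  = eps * \sum_x D1 x * prob_out T x (Some z) - (1 - eps) * \sum_x D2 x * prob_out T x (Some z).
Proof.
rewrite -!swap_sum !big_distrr -sumrB /=; apply: eq_bigr => p _ /=; ring.
Qed.

Lemma G_eq (R : realType) k (T : rdtree R k) (eps : R) (D1 : {ffun input k -> R}) z :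
  \sum_x D1 x * (eps * prob_out T x (Some z) - (1 - eps) * prob_out T x (Some (~~ z)))
  = eps * \sum_x D1 x * prob_out T x (Some z) - (1 - eps) * \sum_x D1 x * prob_out T x (Some (~~ z)).
Proof.
rewrite !big_distrr -sumrB /=; apply: eq_bigr => x _ /=; ring.
Qed.

Lemma step1 (R : realType) (k : nat) (h : pfun k)
  (D : bool -> {ffun input k -> R})
  (hD : forall z, is_dist (D z))
  (hsupp : forall z x, 0 < D z x -> h x = Some z)
  (eps : R) (heps0 : 0 <= eps) (heps1 : eps < 1) (T : rdtree R k)
  (hT : postbpp_correct eps h T) :
  exists (C : conj_t k) (z : bool), (width C <= rcost T)%N /\
    eps * conj_prob C (D z) >= (1 - eps) * conj_prob C (D (~~ z)) /\
    0 < conj_prob C (D z).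
Proof.
apply: NNPP => Hn.
have Hlt : forall C z, (width C <= rcost T)%N -> 0 < conj_prob C (D z) ->
    eps * conj_prob C (D z) - (1 - eps) * conj_prob C (D (~~ z)) < 0.
  move=> C z hw hp; rewrite subr_lt0 ltNge; apply/negP => hle; apply: Hn.
  by exists C, z.
have cp_ge0 : forall C z, 0 <= conj_prob C (D z).
  move=> C z; rewrite /conj_prob; apply: sumr_ge0 => x _; apply: mulr_ge0.
    by case: (hD z) => H _; exact: H.
  by rewrite ler0n.
have Hle : forall C z, (width C <= rcost T)%N ->
    eps * conj_prob C (D z) - (1 - eps) * conj_prob C (D (~~ z)) <= 0.
  move=> C z hw; have := cp_ge0 C z; rewrite le0r => /orP [/eqP E|hp].
    rewrite E mulr0 sub0r oppr_le0; apply: mulr_ge0; last exact: cp_ge0.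
    lra.
  exact: ltW (Hlt _ _ hw hp).
case: (hT) => [[hall hs] hc].
have hp1 : forall p : R * dtree k, p \in (T : seq (R * dtree k)) -> 0 <= p.1 by move=> p pin; move/allP: hall => /(_ p pin).
have hdep : forall p : R * dtree k, p \in (T : seq (R * dtree k)) -> 0 < p.1 -> (depth p.2 <= rcost T)%N.
  by move=> p pin hp; apply: (leq_bigmax_seq (F := fun p => depth p.2)).
pose inner z (p : R * dtree k) := \sum_(l <- leaves p.2) (l.2 == Some z)%:R *
   (eps * conj_prob l.1 (D z) - (1 - eps) * conj_prob l.1 (D (~~ z))).
pose Q z := \sum_(p <- T) p.1 * inner z p.
have Hterm : forall z (p : R * dtree k), p \in (T : seq (R * dtree k)) -> p.1 * inner z p <= 0.
  move=> z p pin; have := hp1 p pin; rewrite le0r => /orP [/eqP ->|hp].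
    by rewrite mul0r.
  apply: mulr_ge0_le0; first exact: ltW.
  rewrite /inner big_seq; apply: sumr_le0 => l lin; apply: mulr_ge0_le0.
    by rewrite ler0n.
  apply: Hle; exact: leq_trans (leaves_width lin) (hdep p pin hp).
have QE : forall z, Q z = eps * \sum_x D z x * prob_out T x (Some z)
     - (1 - eps) * \sum_x D (~~ z) x * prob_out T x (Some z).
  move=> z; rewrite /Q /inner -outer_eq; apply: eq_bigr => p _.
  by rewrite inner_eq.
have Gge : forall z, 0 <= \sum_x D z x * (eps * prob_out T x (Some z) - (1 - eps) * prob_out T x (Some (~~ z))).
  move=> z; apply: sumr_ge0 => x _.
  case: (hD z) => hge _; have [->|hp] := eqVneq (D z x) 0; first by rewrite mul0r.
  have hp' : 0 < D z x by rewrite lt_def hp hge.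
  apply: mulr_ge0; first exact: ltW.
  by apply: (pointwise hT); apply: hsupp.
have Qsum : Q true + Q false =
  \sum_x D true x * (eps * prob_out T x (Some true) - (1 - eps) * prob_out T x (Some (~~ true))) +
  \sum_x D false x * (eps * prob_out T x (Some false) - (1 - eps) * prob_out T x (Some (~~ false))).
  rewrite !G_eq !QE /=; ring.
have Qf : Q false <= 0.
  by rewrite /Q big_seq; apply: sumr_le0 => p pin; apply: Hterm.
have [x0 hx0] : exists x0, 0 < D true x0.
  apply: NNPP => Hx; case: (hD true) => hge hsum.
  move: hsum; rewrite big1 => [H|x _]; first by move: (@oner_neq0 R); rewrite H eqxx.
  have := hge x; rewrite le0r => /orP [/eqP //|hp]; exfalso; apply: Hx; by exists x.
have hx0h := hsupp _ _ hx0.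
case: (hc x0 true hx0h) => hN hr.
have hNp : 0 < prob_not_bot T x0.
  have := total_split T x0; rewrite hs => E; lra.
have hP : 0 < prob_out T x0 (Some true).
  have hq : 0 < prob_out T x0 (Some true) / prob_not_bot T x0 by lra.
  have := mulr_gt0 hq hNp; by rewrite divfK // lt0r_neq0.
case: (sum_pos hP) => p pin; case E: (eval_tree p.2 x0 == Some true); last first.
  by rewrite mulr0 ltxx.
rewrite mulr1 => hp.
case: (leaves_ex p.2 x0) => l lin /andP [hcl /eqP hl2].
have hl2' : l.2 = Some true by rewrite hl2; apply/eqP.
have hcp : 0 < conj_prob l.1 (D true).
  rewrite /conj_prob (bigD1 x0) //= hcl mulr1.
  apply: (lt_le_trans hx0); rewrite lerDl; apply: sumr_ge0 => x _; apply: mulr_ge0.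
    by case: (hD true) => hge _; exact: hge.
  by rewrite ler0n.
have Qt : Q true < 0.
  apply: sum_neg; first by move=> q qin; apply: Hterm.
  exists p => //; rewrite pmulr_rlt0 //.
  apply: sum_neg.
    move=> l' lin'; apply: mulr_ge0_le0; first by rewrite ler0n.
    apply: Hle; exact: leq_trans (leaves_width lin') (hdep p pin hp).
  exists l => //; rewrite hl2' eqxx mul1r; apply: Hlt => //.
  exact: leq_trans (leaves_width lin) (hdep p pin hp).
have := Gge true; have := Gge false; rewrite -/(Q true).
move: Qsum; lra.
Qed.

Definition setv k (x : input k) i b : input k := [ffun j => if j == i then b else x j].

Fixpoint full k (s : seq 'I_k) (g : input k -> option bool) : dtree k :=
  match s with
  | [::] => @Leaf k (g [ffun=> false])
  | i :: s' => Node i (full s' (fun x => g (setv x i false))) (full s' (fun x => g (setv x i true)))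
  end.

Lemma full_eval k (s : seq 'I_k) g x :
  eval_tree (full s g) x = g [ffun j => if j \in s then x j else false].
Proof.
elim: s g => [|i s IH] g /=.
  by congr g; apply/ffunP => j; rewrite !ffunE.
case Hx: (x i); rewrite IH; congr g; apply/ffunP => j; rewrite !ffunE !inE;
  case: eqP => [->|] //=; by rewrite Hx.
Qed.

Lemma full_depth k (s : seq 'I_k) g : depth (full s g) = size s.
Proof. by elim: s g => [|i s IH] g //=; rewrite !IH maxnn. Qed.

Lemma full_enum k (t : dtree k) x : eval_tree (full (enum 'I_k) (eval_tree t)) x = eval_tree t x.
Proof.
rewrite full_eval; congr eval_tree; apply/ffunP => j; by rewrite !ffunE mem_enum.
Qed.

Lemma d_le_k (R : realType) k (eps : R) (h : pfun k) d :
  PostBPP_eq eps h d -> (d <= k)%N.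
Proof.
case=> [[T [hT _]] hmin].
pose T' : rdtree R k := map (fun p => (p.1, full (enum 'I_k) (eval_tree p.2))) T.
have Po : forall x o, prob_out T' x o = prob_out T x o.
  by move=> x o; rewrite /prob_out big_map; apply: eq_bigr => p _ /=; rewrite full_enum.
have Pn : forall x, prob_not_bot T' x = prob_not_bot T x.
  by move=> x; rewrite /prob_not_bot big_map; apply: eq_bigr => p _ /=; rewrite full_enum.
have hT' : postbpp_correct eps h T'.
  case: hT => [[hall hs] hc]; split.
    by split; [rewrite all_map | rewrite big_map].
  by move=> x b hx; rewrite !Po Pn; apply: hc.
apply: (leq_trans (hmin _ hT')); rewrite /rcost big_map.
apply/bigmax_leqP_seq => p _ _ /=; by rewrite full_depth size_enum_ord.
Qed.

Lemma cp_split (R : realType) k (C : conj_t k) i (D : {ffun input k -> R}) :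
  conj_prob C D = conj_prob ((i,false) |: C) D + conj_prob ((i,true) |: C) D.
Proof.
rewrite /conj_prob -big_split /=; apply: eq_bigr => x _ /=.
rewrite !conj_eval_U1; case: (x i); case: (conj_eval C x); rewrite /= ?mulr0 ?addr0 ?add0r //.
Qed.

Definition good (R : realType) k (D : bool -> {ffun input k -> R}) (eps : R) C z :=
  (1 - eps) * conj_prob C (D (~~ z)) <= eps * conj_prob C (D z) /\ 0 < conj_prob C (D z).

Lemma cp_ge0 (R : realType) k (C : conj_t k) (D : {ffun input k -> R}) :
  is_dist D -> 0 <= conj_prob C D.
Proof.
case=> hge _; rewrite /conj_prob; apply: sumr_ge0 => x _; by apply: mulr_ge0; rewrite ?ler0n.
Qed.

Lemma refine (R : realType) k (D : bool -> {ffun input k -> R})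
  (hD : forall z, is_dist (D z)) (eps : R) (heps0 : 0 <= eps) (heps1 : eps <= 1) C z i :
  good D eps C z -> exists b, good D eps ((i,b) |: C) z.
Proof.
move=> [hC1 hC2]; apply: NNPP => Hn.
have Hb : forall b, eps * conj_prob ((i,b) |: C) (D z) <= (1 - eps) * conj_prob ((i,b) |: C) (D (~~ z))
   /\ (0 < conj_prob ((i,b) |: C) (D z) ->
       eps * conj_prob ((i,b) |: C) (D z) < (1 - eps) * conj_prob ((i,b) |: C) (D (~~ z))).
  move=> b.
  have hs : forall a, 0 < a -> a = conj_prob ((i,b) |: C) (D z) ->
     eps * a < (1 - eps) * conj_prob ((i,b) |: C) (D (~~ z)).
    move=> a ha E; subst a; rewrite ltNge; apply/negP => hle; apply: Hn; by exists b; split.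
  split; last by move=> hp; apply: (hs _ hp).
  have := cp_ge0 ((i,b) |: C) (hD z); rewrite le0r => /orP [/eqP ->|hp].
    rewrite mulr0; apply: mulr_ge0; first lra.
    exact: cp_ge0.
  exact: ltW (hs _ hp erefl).
move: hC1 hC2; rewrite (cp_split C i (D z)) (cp_split C i (D (~~ z))) !mulrDr.
case: (Hb false) => hf1 hf2; case: (Hb true) => ht1 ht2.
have hc0 : 0 <= (1 - eps) * conj_prob ((i,false) |: C) (D (~~ z)).
  by apply: mulr_ge0; [lra | exact: cp_ge0].
have := cp_ge0 ((i,false) |: C) (hD z); rewrite le0r => /orP [/eqP E|hp].
  rewrite E add0r => h1 h2; have := ht2 h2; lra.
have := hf2 hp => h3 h1 h2; lra.
Qed.

Lemma pad (R : realType) k (D : bool -> {ffun input k -> R})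
  (hD : forall z, is_dist (D z)) (eps : R) (heps0 : 0 <= eps) (heps1 : eps <= 1) z d :
  (d <= k)%N -> forall n C, (width C + n = d)%N -> good D eps C z ->
  exists C', width C' = d /\ good D eps C' z.
Proof.
move=> hdk; elim=> [|n IH] C hw hg.
  by exists C; rewrite -hw addn0.
pose V := [set l.1 | l in C].
have hV : (#|V| < k)%N.
  apply: (leq_ltn_trans (leq_imset_card _ _)); rewrite -/(width C); lia.
have [i hi] : exists i, i \notin V.
  apply: NNPP => Hn; move: hV.
  have -> : V = [set: 'I_k].
    apply/setP => j; rewrite inE; apply: NNPP => Hj; apply: Hn; exists j.
    by apply/negP => Hj'; apply: Hj; rewrite Hj'.
  by rewrite cardsT card_ord ltnn.
have hnot : forall b, (i,b) \notin C.
  move=> b; apply/negP => hb; move/negP: hi; apply.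
  exact: (imset_f (fun l : 'I_k * bool => l.1) hb).
case: (refine hD heps0 heps1 i hg) => b hgb.
apply: (IH _ _ hgb).
rewrite /width cardsU1 hnot -/(width C); lia.
Qed.

Theorem fact2p1 (R : realType) (k : nat) (h : pfun k)
  (D : bool -> {ffun input k -> R})
  (hD : forall z, is_dist (D z))
  (hsupp : forall z x, 0 < D z x -> h x = Some z)
  (eps : R) (heps0 : 0 <= eps) (heps1 : eps <= 1)
  (d : nat) (hd : PostBPP_eq eps h d) :
  exists (C : conj_t k) (z : bool),
    width C = d /\
    eps * conj_prob C (D z) >= (1 - eps) * conj_prob C (D (~~ z)) /\
    0 < conj_prob C (D z).
Proof.
have hdk := d_le_k hd.
have [C0 [z0 [hw0 hg0]]] : exists (C : conj_t k) (z : bool), (width C <= d)%N /\ good D eps C z.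
  move: heps1; rewrite le_eqVlt => /orP [/eqP E|hlt].
    exists set0, true; split; first by rewrite /width cards0.
    have h1 : conj_prob set0 (D true) = 1.
      rewrite /conj_prob; transitivity (\sum_x D true x); last by case: (hD true).
      apply: eq_bigr => x _.
      by rewrite conj_eval0 /= ?mulr1n mulr1.
    rewrite /good h1 E subrr mul0r; split; [lra | exact: ltr01].
  case: hd => [[T [hT hc]] _].
  case: (step1 hD hsupp heps0 hlt hT) => C [z [hw hg]].
  by exists C, z; rewrite -hc.
have [C [hw hg]] := pad hD heps0 heps1 hdk (n := (d - width C0)%N) (C := C0) ltac:(lia) hg0.
by exists C, z0; case: hg.
Qed.
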